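(* Let $\llbracket\cdot\rrbracket$ be an interpretation of types, let $\rho$ be a type and $i\le i'$ in $I_\rho$. (1) If $\rho\in\mathrm{Type}^+$, then the factor system $(\llbracket\rho\rrbracket_i)_{i\in I_\rho}$ is direct, and for all $a\in\llbracket\rho\rrbracket$, $a_i\in\llbracket\rho\rrbracket_i$: $a\triangleright a_i$ implies $a\triangleright emb_{i,i'}(a_i)$. (2) If $\rho\in\mathrm{Type}^-$, then the factor system $(\llbracket\rho\rrbracket_i)_{i\in I_\rho}$ is inverse, and for all $a\in\llbracket\rho\rrbracket$, $a_{i'}\in\llbracket\rho\rrbracket_{i'}$: $a\triangleright a_{i'}$ implies $a\triangleright proj_{i',i}(a_{i'})$.
   Context: Systems and factor systems: for a non-empty directed preordered set $I$, a system consists of pairwise disjoint sets $M_i$ ($i\in I$) and relations $\triangleright\subseteq M_{i'}\times M_i$ ($i\le i'$), reflexive for $i=i'$; $a_i\approx b_j$ iff some $c\in M_{i'}$, $i'\ge i,j$, has $c\triangleright a_i,c\triangleright b_j$; prefactor system: $a_{i'}\approx a_i\iff a_{i'}\triangleright a_i$. A factor system is a prefactor system with $\approx$-preserving $emb_{i,i'}:M_i\to M_{i'}$, $proj_{i',i}:M_{i'}\to M_i$ with $emb_{i,i}(a)\approx a$, $proj_{i,i}(a)\approx a$, $emb_{i',i''}\circ emb_{i,i'}(a)\approx emb_{i,i''}(a)$, $proj_{i',i}\circ proj_{i'',i'}(a)\approx proj_{i'',i}(a)$, $proj_{i',i}(emb_{i,i'}(a))\approx a$, and $a_{i'}\triangleright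 a_i\Rightarrow emb_{i',i''}(a_{i'})\triangleright a_i$, $a_{i''}\triangleright a_i\Rightarrow proj_{i'',i'}(a_{i''})\triangleright a_i$ ($i\le i'\le i''$). It is direct iff $a_{i'}\triangleright a_i\iff a_{i'}\approx emb_{i,i'}(a_i)$, inverse iff $a_{i'}\triangleright a_i\iff proj_{i',i}(a_{i'})\approx a_i$. Filters: for each such $I$ a family $\mathcal F(I)$ of cofinal subsets, closed under supersets and finite intersections, containing all non-empty up-sets; standing Condition (D): $H\in\mathcal F(I\times J)$, $I'\in\mathcal F(I)$ imply $\{j\mid\exists i\in I',(i,j)\in H\}\in\mathcal F(J)$. A target for $M_I$: a set $M$ with relation $a\triangleright a_i$ such that $\{i\mid\exists a_i,a\triangleright a_i\}\in\mathcal F(I)$ and $a\triangleright a_{i'},a\triangleright a_i\Rightarrow a_{i'}\triangleright a_i$; a limit is a target $M$ such that for every target $N$ there is a unique $\Phi:N\to M$ with $b\triangleright a_i\Rightarrow\Phi(b)\triangleright a_i$. Function space of factor systems $[M_I\to N_J]$: indices $i\to j\in I\times J$, states = $\approx$-preserving functions $M_i\to N_j$, $f'\triangleright f$ iff $a_{i'}\triangleright a_i\Rightarrow f'(a_{i'})\triangleright f(a_i)$, embeddings $f\mapsto emb_{j,j'}\circ f\circ proj_{i',i}$, projections $f'\mapsto proj_{j',j}\circ f'\circ emb_{i,i'}$. For targets $M,N$: $[M\to_{\mathcal F}N]=\{f:M\to N\mid I_f\in\mathcal F(I\times J)\}$ with $f\triangleright f_{i\to j}$ iff $a\triangleright a_i\Rightarrow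 f(a)\triangleright f_{i\to j}(a_i)$ for all $a\in M,a_i\in M_i$, and $I_f=\{i\to j\mid\exists f_{i\to j},f\triangleright f_{i\to j}\}$. Types: $\rho::=\iota\mid\rho\to\rho$ over base types $\iota$, one of which is $\mathsf{prop}$. Positive and negative types: $\mathrm{Type}^+\ni\rho^+::=\iota\mid\rho^-\to\rho^+$ and $\mathrm{Type}^-\ni\rho^-::=\mathsf{prop}\mid\rho^+\to\rho^-$ ($\iota$ any base type). Each type has a non-empty directed index set $I_\rho$, with $I_{\mathsf{prop}}=\{\mathsf{prop}\}$ and $I_{\rho\to\sigma}=I_\rho\times I_\sigma$. An interpretation of types assigns to each type $\rho$ a factor system $(\llbracket\rho\rrbracket_i)_{i\in I_\rho}$ and a limit $\llbracket\rho\rrbracket$ of it (with relation $a\triangleright a_i$), such that: for each base type $\iota$ the factor system is direct; $\mathsf{prop}$ is interpreted by the one-index factor system with state $\{true,false\}$ (relations are equality) and limit $\{true,false\}$ (with $b\triangleright b'\iff b=b'$); $\rho\to\sigma$ is interpreted by the function-space factor system $[(\llbracket\rho\rrbracket_i)_{i}\to(\llbracket\sigma\rrbracket_j)_{j}]$ with limit $[\llbracket\rho\rrbracket\to_{\mathcal F}\llbracket\sigma\rrbracket]$. *)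

(* Defs.v *)
Set Implicit Arguments.

Record dpo := {
  car :> Type;
  le : car -> car -> Prop;
  le_refl : forall x, le x x;
  le_trans : forall x y z, le x y -> le y z -> le x z;
  dpo_ne : inhabited car;
  dpo_dir : forall x y, exists z, le x z /\ le y z }.

Arguments le {d} _ _.

Definition prod_le (I J : dpo) (p q : I * J) : Prop :=
  le (fst p) (fst q) /\ le (snd p) (snd q).

Definition prodD (I J : dpo) : dpo.
Proof.
  refine {| car := (car I * car J)%type; le := @prod_le I J |}.
  - intros [x y]; split; apply le_refl.
  - intros [x1 y1] [x2 y2] [x3 y3] [h1 h2] [h3 h4]; split; simpl in *;
      eapply le_trans; eauto.
  - destruct (dpo_ne I) as [x]; destruct (dpo_ne J) as [y]; exact (inhabits (x, y)).
  - intros [x1 y1] [x2 y2]. destruct (dpo_dir I x1 x2) as [x [? ?]].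
    destruct (dpo_dir J y1 y2) as [y [? ?]]. exists (x, y); split; split; auto.
Defined.

Definition unitD : dpo.
Proof.
  refine {| car := unit; le := fun _ _ => True |}; auto.
  - exact (inhabits tt).
  - intros; exists tt; auto.
Defined.

Definition cofinal (D : dpo) (S : D -> Prop) : Prop :=
  forall i, exists j, le i j /\ S j.
Definition upset (D : dpo) (S : D -> Prop) : Prop :=
  forall i j, S i -> le i j -> S j.

Record filters := {
  Fam : forall D : dpo, (D -> Prop) -> Prop;
  Fam_cofinal : forall (D : dpo) (S : D -> Prop), Fam D S -> @cofinal D S;
  Fam_super : forall (D : dpo) (S T : D -> Prop), Fam D S -> (forall i, S i -> T i) -> Fam D T;
  Fam_inter : forall (D : dpo) (S T : D -> Prop), Fam D S -> Fam D T -> Fam D (fun i => S i /\ T i);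
  Fam_upset : forall (D : dpo) (S : D -> Prop), (exists i, S i) -> @upset D S -> Fam D S;
  Fam_D : forall (I J : dpo) (H : prodD I J -> Prop) (I' : I -> Prop),
      Fam (prodD I J) H -> Fam I I' ->
      Fam J (fun j => exists i, I' i /\ H (i, j)) }.

(** The set of states M_i is the subset
    of [st i] cut out by [ok] (this lets function spaces be represented as
    raw functions satisfying ≈-preservation).  [rel i i' a' a] is a' ▷ a
    with a' in M_{i'}, a in M_i; [emb]/[proj] are only given for i <= i'. *)
Record sys (D : dpo) := {
  st : D -> Type;
  ok : forall i, st i -> Prop;
  rel : forall i i', st i' -> st i -> Prop;
  emb : forall i i', le i i' -> st i -> st i';
  proj : forall i i', le i i' -> st i' -> st i }.

Arguments st {D} s i : rename.
Arguments ok {D} s {i} _ : rename.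
Arguments rel {D} s {i i'} _ _ : rename.
Arguments emb {D} s {i i'} _ _ : rename.
Arguments proj {D} s {i i'} _ _ : rename.

Definition approx (D : dpo) (M : sys D) (i j : D) (a : st M i) (b : st M j) : Prop :=
  exists (k : D) (c : st M k), ok M c /\ le i k /\ le j k /\ rel M c a /\ rel M c b.
Arguments approx {D M i j} _ _.

Definition is_system (D : dpo) (M : sys D) : Prop :=
  (forall (i i' : D) (a' : st M i') (a : st M i), ok M a' -> ok M a ->
      rel M a' a -> le i i') /\
  (forall (i : D) (a : st M i), ok M a -> rel M a a).

Definition is_prefactor (D : dpo) (M : sys D) : Prop :=
  is_system M /\
  forall (i i' : D), le i i' -> forall (a' : st M i') (a : st M i),
      ok M a' -> ok M a -> (approx a' a <-> rel M a' a).

Definition is_factor (D : dpo) (M : sys D) : Prop :=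
  is_prefactor M /\
  (forall (i i' : D) (h : le i i') (a : st M i), ok M a -> ok M (emb M h a)) /\
  (forall (i i' : D) (h : le i i') (a : st M i'), ok M a -> ok M (proj M h a)) /\
  (forall (i i' : D) (h : le i i') (a b : st M i), ok M a -> ok M b ->
      approx a b -> approx (emb M h a) (emb M h b)) /\
  (forall (i i' : D) (h : le i i') (a b : st M i'), ok M a -> ok M b ->
      approx a b -> approx (proj M h a) (proj M h b)) /\
  (forall (i : D) (h : le i i) (a : st M i), ok M a -> approx (emb M h a) a) /\
  (forall (i : D) (h : le i i) (a : st M i), ok M a -> approx (proj M h a) a) /\
  (forall (i i' i'' : D) (h1 : le i i') (h2 : le i' i'') (h3 : le i i'')
      (a : st M i), ok M a -> approx (emb M h2 (emb M h1 a)) (emb M h3 a)) /\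
  (forall (i i' i'' : D) (h1 : le i i') (h2 : le i' i'') (h3 : le i i'')
      (a : st M i''), ok M a -> approx (proj M h1 (proj M h2 a)) (proj M h3 a)) /\
  (forall (i i' : D) (h : le i i') (a : st M i), ok M a ->
      approx (proj M h (emb M h a)) a) /\
  (forall (i i' i'' : D) (h1 : le i i') (h2 : le i' i'')
      (a' : st M i') (a : st M i), ok M a' -> ok M a ->
      rel M a' a -> rel M (emb M h2 a') a) /\
  (forall (i i' i'' : D) (h1 : le i i') (h2 : le i' i'')
      (a'' : st M i'') (a : st M i), ok M a'' -> ok M a ->
      rel M a'' a -> rel M (proj M h2 a'') a).

Definition is_direct (D : dpo) (M : sys D) : Prop :=
  forall (i i' : D) (h : le i i') (a' : st M i') (a : st M i),
    ok M a' -> ok M a -> (rel M a' a <-> approx a' (emb M h a)).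

Definition is_inverse (D : dpo) (M : sys D) : Prop :=
  forall (i i' : D) (h : le i i') (a' : st M i') (a : st M i),
    ok M a' -> ok M a -> (rel M a' a <-> approx (proj M h a') a).

Definition is_target (FF : filters) (D : dpo) (M : sys D) (T : Type)
    (tr : T -> forall i : D, st M i -> Prop) : Prop :=
  (forall a : T, Fam FF D (fun i => exists ai : st M i, ok M ai /\ tr a i ai)) /\
  (forall (a : T) (i i' : D) (ai' : st M i') (ai : st M i),
      ok M ai' -> ok M ai -> le i i' -> tr a i' ai' -> tr a i ai -> rel M ai' ai).

Definition is_limit (FF : filters) (D : dpo) (M : sys D) (T : Type)
    (tr : T -> forall i : D, st M i -> Prop) : Prop :=
  is_target FF M tr /\
  forall (N : Type) (trN : N -> forall i : D, st M i -> Prop),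
    is_target FF M trN ->
    exists Phi : N -> T,
      (forall b i (ai : st M i), ok M ai -> trN b i ai -> tr (Phi b) i ai) /\
      (forall Psi : N -> T,
         (forall b i (ai : st M i), ok M ai -> trN b i ai -> tr (Psi b) i ai) ->
         forall b, Psi b = Phi b).

Definition funsys (I J : dpo) (M : sys I) (N : sys J) : sys (prodD I J) :=
  {| st := fun p : prodD I J => st M (fst p) -> st N (snd p);
     ok := fun p f =>
       (forall a, ok M a -> ok N (f a)) /\
       (forall a b : st M (fst p), ok M a -> ok M b -> approx a b -> approx (f a) (f b));
     rel := fun p p' f' f =>
       @prod_le I J p p' /\
       (forall (a' : st M (fst p')) (a : st M (fst p)), ok M a' -> ok M a ->
          rel M a' a -> rel N (f' a') (f a));
     emb := fun p p' h f a' => emb N (proj2 h) (f (proj M (proj1 h) a'));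
     proj := fun p p' h f' a => proj N (proj2 h) (f' (emb M (proj1 h) a)) |}.

Definition frel (I J : dpo) (M : sys I) (N : sys J) (TM TN : Type)
    (trM : TM -> forall i, st M i -> Prop) (trN : TN -> forall j, st N j -> Prop)
    (f : TM -> TN) (p : prodD I J) (g : st (funsys M N) p) : Prop :=
  forall (a : TM) (ai : st M (fst p)), ok M ai -> trM a (fst p) ai ->
    trN (f a) (snd p) (g ai).
Arguments frel {I J M N TM TN} trM trN f p g.

Definition funlim (FF : filters) (I J : dpo) (M : sys I) (N : sys J) (TM TN : Type)
    (trM : TM -> forall i, st M i -> Prop) (trN : TN -> forall j, st N j -> Prop) : Type :=
  { f : TM -> TN | Fam FF (prodD I J)
      (fun p => exists g : st (funsys M N) p, ok (funsys M N) g /\ frel trM trN f p g) }.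

Definition propsys : sys unitD :=
  {| st := fun _ => bool; ok := fun _ _ => True;
     rel := fun _ _ b b' => b = b';
     emb := fun _ _ _ b => b; proj := fun _ _ _ b => b |}.

Inductive ty (B : Type) : Type :=
| TProp : ty B
| TBase : B -> ty B
| TArr : ty B -> ty B -> ty B.
Arguments TProp {B}.
Arguments TBase {B} _.

Inductive positive {B : Type} : ty B -> Prop :=
| pos_prop : positive TProp
| pos_base : forall b, positive (TBase b)
| pos_arr : forall r s, negative r -> positive s -> positive (TArr r s)
with negative {B : Type} : ty B -> Prop :=
| neg_prop : negative TProp
| neg_arr : forall r s, positive r -> negative s -> negative (TArr r s).

Record basedata (B : Type) := {
  bidx : B -> dpo;
  bsys : forall b, sys (bidx b);
  blim : B -> Type;
  brel : forall b, blim b -> forall i, st (bsys b) i -> Prop }.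

Section Interp.
Variables (B : Type) (FF : filters) (bd : basedata B).

Fixpoint idx (r : ty B) : dpo :=
  match r with
  | TProp => unitD
  | TBase b => bidx bd b
  | TArr r s => prodD (idx r) (idx s)
  end.

Fixpoint isys (r : ty B) : sys (idx r) :=
  match r return sys (idx r) with
  | TProp => propsys
  | TBase b => bsys bd b
  | TArr r s => funsys (isys r) (isys s)
  end.

Fixpoint ilimd (r : ty B) : { T : Type & T -> forall i, st (isys r) i -> Prop } :=
  match r return { T : Type & T -> forall i, st (isys r) i -> Prop } with
  | TProp => existT (fun T : Type => T -> forall i, st (isys TProp) i -> Prop)
                (bool : Type) (fun (b : bool) _ (b' : bool) => b = b')
  | TBase b => existT (fun T : Type => T -> forall i, st (isys (TBase b)) i -> Prop)
                (blim bd b) (brel bd b)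
  | TArr r s =>
      existT (fun T : Type => T -> forall i, st (isys (TArr r s)) i -> Prop) (@funlim FF _ _ (isys r) (isys s) (projT1 (ilimd r)) (projT1 (ilimd s))
                  (projT2 (ilimd r)) (projT2 (ilimd s)))
        (fun F p g => frel (projT2 (ilimd r)) (projT2 (ilimd s)) (proj1_sig F) p g)
  end.

Definition ilim (r : ty B) : Type := projT1 (ilimd r).
Definition ilrel (r : ty B) : ilim r -> forall i, st (isys r) i -> Prop :=
  projT2 (ilimd r).

Definition is_interp : Prop :=
  (forall b : B, is_factor (bsys bd b) /\ is_direct (bsys bd b)) /\
  (forall r : ty B, is_factor (isys r) /\ is_limit FF (isys r) (ilrel r)).
End Interp.

(* Main.v *)
Require Import Defs.

Section Gen.
Variables (D : dpo) (M : sys D) (HF : is_factor M).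

Lemma ap_rel k (x y : st M k) : ok M x -> ok M y -> approx x y -> rel M x y.
Proof. intros ox oy H. destruct HF as [[_ Hpre] _]. apply (Hpre k k (le_refl D k)); auto. Qed.

Lemma rel_ap k (x y : st M k) : ok M x -> ok M y -> rel M x y -> approx x y.
Proof. intros ox oy H. destruct HF as [[_ Hpre] _]. apply (Hpre k k (le_refl D k)); auto. Qed.

Lemma ap_refl k (x : st M k) : ok M x -> approx x x.
Proof. intros ox. destruct HF as [[[_ Hr] _] _]. exists k, x; repeat split; auto; apply le_refl. Qed.

Lemma ap_sym i j (x : st M i) (y : st M j) : approx x y -> approx y x.
Proof. intros [k [c [? [? [? [? ?]]]]]]. exists k, c; repeat split; auto. Qed.

Lemma ap_trans k (x y z : st M k) : ok M x -> ok M y -> ok M z ->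
  approx x y -> approx y z -> approx x z.
Proof.
  intros ox oy oz H1 H2.
  apply ap_sym in H1. apply ap_rel in H1; auto. apply ap_rel in H2; auto.
  exists k, y; repeat split; auto; apply le_refl.
Qed.

Lemma emb_ok i i' (h : le i i') (a : st M i) : ok M a -> ok M (emb M h a).
Proof. destruct HF as [_ [H _]]. apply H. Qed.
Lemma proj_ok i i' (h : le i i') (a : st M i') : ok M a -> ok M (proj M h a).
Proof. destruct HF as [_ [_ [H _]]]. apply H. Qed.
Lemma emb_ap i i' (h : le i i') (a b : st M i) : ok M a -> ok M b -> approx a b -> approx (emb M h a) (emb M h b).
Proof. destruct HF as [_ [_ [_ [H _]]]]. apply H. Qed.
Lemma proj_ap i i' (h : le i i') (a b : st M i') : ok M a -> ok M b -> approx a b -> approx (proj M h a) (proj M h b).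
Proof. destruct HF as [_ [_ [_ [_ [H _]]]]]. apply H. Qed.
Lemma emb_comp i i' i'' (h1 : le i i') (h2 : le i' i'') (h3 : le i i'') (a : st M i) :
  ok M a -> approx (emb M h2 (emb M h1 a)) (emb M h3 a).
Proof. destruct HF as [_ [_ [_ [_ [_ [_ [_ [H _]]]]]]]]. apply H. Qed.
Lemma proj_comp i i' i'' (h1 : le i i') (h2 : le i' i'') (h3 : le i i'') (a : st M i'') :
  ok M a -> approx (proj M h1 (proj M h2 a)) (proj M h3 a).
Proof. destruct HF as [_ [_ [_ [_ [_ [_ [_ [_ [H _]]]]]]]]]. apply H. Qed.
Lemma proj_emb i i' (h : le i i') (a : st M i) : ok M a -> approx (proj M h (emb M h a)) a.
Proof. destruct HF as [_ [_ [_ [_ [_ [_ [_ [_ [_ [H _]]]]]]]]]]. apply H. Qed.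
Lemma rel_refl k (x : st M k) : ok M x -> rel M x x.
Proof. destruct HF as [[[_ Hr] _] _]. apply Hr. Qed.

Hint Resolve emb_ok proj_ok rel_refl : core.

Variables (FF : filters) (T : Type) (tr : T -> forall i : D, st M i -> Prop)
  (HL : is_limit FF M tr).

Lemma limit_ext (trN : T -> forall i : D, st M i -> Prop) :
  is_target FF M trN -> (forall x j b, tr x j b -> trN x j b) ->
  forall x j b, ok M b -> trN x j b -> tr x j b.
Proof.
  intros HT Hsub x j b ob Hb.
  destruct HL as [Ht Huniv].
  destruct (Huniv T trN HT) as [Phi [HPhi _]].
  destruct (Huniv T tr Ht) as [Phi0 [_ Hu0]].
  assert (E1 : Phi x = Phi0 x) by (apply Hu0; intros; apply HPhi; auto).
  assert (E2 : x = Phi0 x) by (apply (Hu0 (fun y => y)); auto).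
  rewrite E2, <- E1. apply HPhi; auto.
Qed.

Lemma cofin a k : exists k', le k k' /\ exists c, ok M c /\ tr a k' c.
Proof.
  destruct HL as [[HFam _] _].
  destruct (Fam_cofinal _ _ _ (HFam a) k) as [k' [Hk [c Hc]]]. eauto.
Qed.

Lemma direct_lim (HD : is_direct M) i i' (h : le i i') a ai :
  ok M ai -> tr a i ai -> tr a i' (emb M h ai).
Proof.
  intros okai Hai. set (e := emb M h ai).
  assert (oke : ok M e) by (unfold e; auto).
  pose (trN := fun x j b => tr x j b \/
     (x = a /\ exists E : i' = j, b = eq_rect i' (st M) e j E)).
  apply (limit_ext trN); [ | intros; left; auto | auto | right; split; auto; exists eq_refl; reflexivity ].
  destruct HL as [[HFam Hcoh] _].
  split.
  - intro x. eapply Fam_super; [apply (HFam x)|]. intros j [b [? ?]]; exists b; split; auto. left; auto.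
  - intros x j j' b' b okb' okb hjj' H1 H2.
    destruct H1 as [H1 | [Hx [E1 Hb']]]; destruct H2 as [H2 | [Hx2 [E2 Hb]]].
    + eapply Hcoh; eauto.
    + subst x. destruct E2. simpl in Hb. subst b.
      assert (Hb'ai : rel M b' ai) by (eapply Hcoh; eauto; eapply le_trans; eauto).
      apply (HD _ _ (le_trans _ _ _ _ h hjj')) in Hb'ai; auto.
      apply (proj2 (HD _ _ hjj' b' e okb' okb)).
      eapply ap_trans; [ | | | exact Hb'ai | ]; auto.
      apply ap_sym. apply emb_comp; auto.
    + subst x. destruct E1. simpl in Hb'. subst b'.
      destruct (cofin a i') as [k [hk [c [okc Hc]]]].
      assert (hik : le i k) by (eapply le_trans; eauto).
      assert (hjk : le j k) by (eapply le_trans; eauto).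
      assert (R1 : rel M c ai) by (eapply Hcoh; eauto).
      assert (R2 : rel M c b) by (eapply Hcoh; eauto).
      apply (HD _ _ hik) in R1; auto. apply (HD _ _ hjk) in R2; auto.
      apply (proj2 (HD _ _ hjj' e b okb' okb)).
      set (y := emb M hjj' b).
      assert (oky : ok M y) by (unfold y; auto).
      assert (A : approx (emb M hk e) (emb M hk y)).
      { eapply ap_trans with (y := emb M hik ai); auto.
        - apply emb_comp; auto.
        - eapply ap_trans with (y := c); auto.
          + apply ap_sym; auto.
          + eapply ap_trans; [ | | | exact R2 | ]; auto.
            apply ap_sym. apply emb_comp; auto. }
      apply (proj_ap _ _ hk) in A; auto.
      eapply ap_trans; [ | | | apply ap_sym, (proj_emb _ _ hk); auto | ]; auto.
      eapply ap_trans; [ | | | exact A | ]; auto.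
      apply proj_emb; auto.
    + destruct E1. destruct E2. simpl in *. subst. auto.
Qed.

Lemma inverse_lim (HI : is_inverse M) i i' (h : le i i') a ai' :
  ok M ai' -> tr a i' ai' -> tr a i (proj M h ai').
Proof.
  intros okai Hai. set (p := proj M h ai').
  assert (okp : ok M p) by (unfold p; auto).
  pose (trN := fun x j b => tr x j b \/
     (x = a /\ exists E : i = j, b = eq_rect i (st M) p j E)).
  apply (limit_ext trN); [ | intros; left; auto | auto | right; split; auto; exists eq_refl; reflexivity ].
  destruct HL as [[HFam Hcoh] _].
  split.
  - intro x. eapply Fam_super; [apply (HFam x)|]. intros j [b [? ?]]; exists b; split; auto. left; auto.
  - intros x j j' b' b okb' okb hjj' H1 H2.
    destruct H1 as [H1 | [Hx [E1 Hb']]]; destruct H2 as [H2 | [Hx2 [E2 Hb]]].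
    + eapply Hcoh; eauto.
    + subst x. destruct E2. simpl in Hb. subst b.
      destruct (dpo_dir D j' i') as [z [hz1 hz2]].
      destruct (cofin a z) as [k [hk [c [okc Hc]]]].
      assert (hjk : le j' k) by (eapply le_trans; eauto).
      assert (hik : le i' k) by (eapply le_trans; eauto).
      assert (hk0 : le i k) by (eapply le_trans; eauto).
      assert (R1 : rel M c b') by (eapply Hcoh; eauto).
      assert (R2 : rel M c ai') by (eapply Hcoh; eauto).
      apply (HI _ _ hjk) in R1; auto. apply (HI _ _ hik) in R2; auto.
      apply (proj2 (HI _ _ hjj' b' p okb' okb)).
      apply (proj_ap _ _ hjj') in R1; auto. apply (proj_ap _ _ h) in R2; auto.
      eapply ap_trans; [ | | | apply ap_sym, R1 | ]; auto.
      eapply ap_trans with (y := proj M hk0 c); auto.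
      { apply proj_comp; auto. }
      eapply ap_trans; [ | | | | exact R2 ]; auto.
      apply ap_sym, proj_comp; auto.
    + subst x. destruct E1. simpl in Hb'. subst b'.
      assert (hji : le j i') by (eapply le_trans; eauto).
      assert (R : rel M ai' b) by (eapply Hcoh; eauto).
      apply (HI _ _ hji) in R; auto.
      apply (proj2 (HI _ _ hjj' p b okb' okb)).
      eapply ap_trans; [ | | | | exact R ]; auto.
      apply proj_comp; auto.
    + destruct E1. destruct E2. simpl in *. subst. auto.
Qed.
End Gen.

Lemma fun_direct (I J : dpo) (M : sys I) (N : sys J) :
  is_factor M -> is_factor N -> is_factor (funsys M N) ->
  is_inverse M -> is_direct N -> is_direct (funsys M N).
Proof.
  intros FM FN FF HIM HDN p p' h f' f okf' okf.
  assert (okef : ok (funsys M N) (emb (funsys M N) h f)) by (apply emb_ok; auto).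
  split.
  - intros [_ Hf]. apply rel_ap; auto.
    split; [apply (le_refl (prodD I J)) |].
    intros a'' a' oka'' oka' Hr. simpl.
    assert (R : rel M a'' (proj M (proj1 h) a')).
    { apply (proj2 (HIM _ _ (proj1 h) _ _ oka'' (proj_ok _ _ FM _ _ _ _ oka'))).
      apply proj_ap; auto. apply rel_ap; auto. }
    apply Hf in R; auto; [| apply proj_ok; auto].
    apply (HDN _ _ (proj2 h)) in R; [| apply okf'; auto | apply okf, proj_ok; auto].
    apply ap_rel; auto. apply okf'; auto. apply emb_ok; auto. apply okf, proj_ok; auto.
  - intros Hr0. apply ap_rel in Hr0; auto. destruct Hr0 as [_ Hf].
    split; [exact h|].
    intros a' a oka' oka Hr.
    apply (proj2 (HDN _ _ (proj2 h) _ _ (proj1 okf' _ oka') (proj1 okf _ oka))).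
    assert (R := Hf a' a' oka' oka' (rel_refl _ _ FM _ _ oka')). simpl in R.
    assert (ok1 : ok N (emb N (proj2 h) (f (proj M (proj1 h) a')))).
    { apply emb_ok; auto. apply okf, proj_ok; auto. }
    apply rel_ap in R; auto; [| apply okf'; auto].
    eapply ap_trans; [ auto | | | | exact R | ]; auto.
    + apply okf'; auto.
    + apply emb_ok; auto. apply okf; auto.
    + apply emb_ap; auto. apply okf, proj_ok; auto. apply okf; auto.
      apply okf; auto. apply proj_ok; auto.
      apply (proj1 (HIM _ _ (proj1 h) _ _ oka' oka) Hr).
Qed.

Lemma fun_inverse (I J : dpo) (M : sys I) (N : sys J) :
  is_factor M -> is_factor N -> is_factor (funsys M N) ->
  is_direct M -> is_inverse N -> is_inverse (funsys M N).
Proof.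
  intros FM FN FF HDM HIN p p' h f' f okf' okf.
  assert (okpf : ok (funsys M N) (proj (funsys M N) h f')) by (apply proj_ok; auto).
  split.
  - intros [_ Hf]. apply rel_ap; auto.
    split; [apply (le_refl (prodD I J)) |].
    intros a1 a2 ok1 ok2 Hr. simpl.
    assert (R : rel M (emb M (proj1 h) a1) a2).
    { apply (proj2 (HDM _ _ (proj1 h) _ _ (emb_ok _ _ FM _ _ _ _ ok1) ok2)).
      apply emb_ap; auto. apply rel_ap; auto. }
    apply Hf in R; auto; [| apply emb_ok; auto].
    apply (HIN _ _ (proj2 h)) in R; [| apply okf', emb_ok; auto | apply okf; auto].
    apply ap_rel; auto. apply proj_ok; auto. apply okf', emb_ok; auto. apply okf; auto.
  - intros Hr0. apply ap_rel in Hr0; auto. destruct Hr0 as [_ Hf].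
    split; [exact h|].
    intros a' a oka' oka Hr.
    apply (proj2 (HIN _ _ (proj2 h) _ _ (proj1 okf' _ oka') (proj1 okf _ oka))).
    assert (R := Hf a a oka oka (rel_refl _ _ FM _ _ oka)). simpl in R.
    assert (ok1 : ok N (proj N (proj2 h) (f' (emb M (proj1 h) a)))).
    { apply proj_ok; auto. apply okf', emb_ok; auto. }
    apply rel_ap in R; auto; [| apply okf; auto].
    eapply ap_trans; [ auto | | | | | exact R ]; auto.
    + apply proj_ok; auto. apply okf'; auto.
    + apply okf; auto.
    + apply proj_ap; auto. apply okf'; auto. apply okf', emb_ok; auto.
      apply okf'; auto. apply emb_ok; auto.
      apply (proj1 (HDM _ _ (proj1 h) _ _ oka' oka) Hr).
Qed.

Lemma dir_inv B FF (bd : basedata B) (H : is_interp FF bd) :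
  forall r, (positive r -> is_direct (isys bd r)) /\ (negative r -> is_inverse (isys bd r)).
Proof.
  induction r as [|b|r IHr s IHs].
  - split; intros _; intros i i' h a' a _ _; simpl; split.
    + intros ->. exists tt, a; repeat split; simpl; auto.
    + intros [k [c [_ [_ [_ [E1 E2]]]]]]. simpl in *; congruence.
    + intros ->. exists tt, a; repeat split; simpl; auto.
    + intros [k [c [_ [_ [_ [E1 E2]]]]]]. simpl in *; congruence.
  - split; intro Hp; [apply (proj1 H b) | inversion Hp].
  - destruct H as [_ H2].
    split; intro Hp; inversion Hp; subst.
    + apply fun_direct; try apply (proj1 (H2 _)); try apply (proj1 (H2 (TArr r s))).
      apply IHr; auto. apply IHs; auto.
    + apply fun_inverse; try apply (proj1 (H2 _)); try apply (proj1 (H2 (TArr r s))).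
      apply IHr; auto. apply IHs; auto.
Qed.

Theorem lemma3p5 (B : Type) (FF : filters) (bd : basedata B)
  (Hinterp : is_interp FF bd) (r : ty B) (i i' : idx bd r) (h : le i i') :
  (positive r ->
     is_direct (isys bd r) /\
     forall (a : ilim FF bd r) (ai : st (isys bd r) i),
       ok (isys bd r) ai -> ilrel FF bd r a i ai ->
       ilrel FF bd r a i' (emb (isys bd r) h ai)) /\
  (negative r ->
     is_inverse (isys bd r) /\
     forall (a : ilim FF bd r) (ai' : st (isys bd r) i'),
       ok (isys bd r) ai' -> ilrel FF bd r a i' ai' ->
       ilrel FF bd r a i (proj (isys bd r) h ai')).
Proof.
  destruct (proj2 Hinterp r) as [HF HL].
  destruct (dir_inv _ _ _ Hinterp r) as [Hd Hi].
  split; intro Hp; split; auto; intros.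
  - eapply direct_lim; eauto.
  - eapply inverse_lim; eauto.
Qed.
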